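(* Let $\varepsilon\in\{1,-1\}$ and put $\epsilon_i=1$ for $i\in\{1,\dots,N\}\setminus\{n+1,n+2\}$ and $\epsilon_{n+1}=\epsilon_{n+2}=\varepsilon$. Then the following four difference operators are equal: \[ \overrightarrow{\prod_{a=1}^n}\bigl(1-z_{\bar a}(u)D\bigr)\cdot\bigl(1-z_{\bar n}(u)z_n(u+1)D^2\bigr)\cdot\overleftarrow{\prod_{a=1}^n}\bigl(1-z_a(u)D\bigr) \] \[ =\overrightarrow{\prod_{a=1}^n}\bigl(z_a(u+n+1-a)-D\bigr)\cdot\bigl(z_{\bar n}(u-1)z_n(u)-D^2\bigr)\cdot\overleftarrow{\prod_{a=1}^n}\bigl(z_{\bar a}(u-n-2+a)-D\bigr) \] \[ =\overleftarrow{\prod_{i=1}^N}\bigl(1-\epsilon_ix_i(u)D\bigr)=-\overrightarrow{\prod_{i=1}^N}\bigl(\epsilon_ix_i(u+n+1-i)-D\bigr). \] In particular $L(u)$ is a polynomial of degree $N$ in $D$ whose coefficients lie in $\mathcal Y$.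
   Context: Fix an integer $n\ge 2$ and put $N=2n+2$. Let $Q_a(u)$ ($1\le a\le n$, $u\in\mathbb C$) be algebraically independent commuting indeterminates, $\mathcal Q=\mathbb Z[Q_a(u)^{\pm1}]_{1\le a\le n,\,u\in\mathbb C}$, and $\mathcal K$ its field of fractions. Put $d_a=1+\delta_{an}$, $Y_a(u)=Q_a(u-\frac{d_a}{2})/Q_a(u+\frac{d_a}{2})$ for $1\le a\le n$, $Y_0(u)=1$, and $\mathcal Y=\mathbb Z[Y_a(u)^{\pm1}]_{1\le a\le n,\,u\in\mathbb C}\subset\mathcal Q$. Let $J=\{1\prec2\prec\cdots\prec n\prec\bar n\prec\cdots\prec\bar2\prec\bar1\}$. For $1\le a\le n$ set $z_a(u)=\frac{Y_a(u+\frac a2)}{Y_{a-1}(u+\frac{a+1}2)}$, $z_{\bar a}(u)=\frac{Y_{a-1}(u+\frac{2n-a+3}2)}{Y_a(u+\frac{2n-a+4}2)}$; set $x_a(u)=z_a(u)$, $x_{2n+3-a}(u)=z_{\bar a}(u)$ for $1\le a\le n$, and $x_{n+1}(u)=-x_{n+2}(u)=\frac{Q_n(u+\frac n2)Q_n(u+\frac{n+4}2)}{Q_n(u+\frac{n+2}2)^2}$. $D$ is the shift operator: difference operators are expressions $\sum_j c_j(u)D^j$ with $c_j(u)\in\mathcal K$, multiplied using $D\,c(u)=c(u+1)\,D$. Write $\overrightarrow{\prod}_{i=1}^kX_i=X_1X_2\cdots X_k$ and $\overleftarrow{\prod}_{i=1}^kX_i=X_k\cdots X_2X_1$. Define $L(u)=\overrightarrow{\prod}_{i=1}^{N}\bigl(x_i(u+n+1-i)-D\bigr)$.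 *)

(* Defs.v *)
From mathcomp Require Import all_boot all_order all_algebra.
From mathcomp Require Import complex.
From mathcomp Require Import Rstruct.

Set Implicit Arguments.
Unset Strict Implicit.
Unset Printing Implicit Defensive.

Import Order.TTheory GRing.Theory Num.Theory.
Local Open Scope ring_scope.

Definition CC : numClosedFieldType := complex Rdefinitions.R.

Definition hs (u : CC) (k : int) : CC := u + k%:~R / 2.

Section Defs.
Variable K : fieldType.
Variable n : nat.
(* Q a u : the (invertible) element Q_a(u), used for 1 <= a <= n *)
Variable Q : nat -> CC -> K.

Definition d_ (a : nat) : int := (1 + (a == n))%N%:Z.

Definition Yf (a : nat) (u : CC) : K :=
  if a == 0%N then 1 else Q a (hs u (- d_ a)) / Q a (hs u (d_ a)).

Definition zf (a : nat) (u : CC) : K :=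
  Yf a (hs u a%:Z) / Yf a.-1 (hs u (a.+1)%:Z).

Definition zbf (a : nat) (u : CC) : K :=
  Yf a.-1 (hs u ((2 * n + 3)%:Z - a%:Z)) / Yf a (hs u ((2 * n + 4)%:Z - a%:Z)).

Definition xmid (u : CC) : K :=
  Q n (hs u n%:Z) * Q n (hs u (n + 4)%:Z) / (Q n (hs u (n + 2)%:Z)) ^+ 2.

Definition xf (i : nat) (u : CC) : K :=
  if (i <= n)%N then zf i u
  else if i == n.+1 then xmid u
  else if i == n.+2 then - xmid u
  else zbf (2 * n + 3 - i) u.

Definition epsf (eps : K) (i : nat) : K :=
  if (i == n.+1) || (i == n.+2) then eps else 1.

(* The subring Y = Z[Y_a(u)^{+-1}] of K: smallest subring containing all
   Y_a(u) and Y_a(u)^{-1}, 1 <= a <= n, u in C. *)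
Inductive inY : K -> Prop :=
| inY_Y a v : (1 <= a <= n)%N -> inY (Yf a v)
| inY_Yinv a v : (1 <= a <= n)%N -> inY (Yf a v)^-1
| inY_1 : inY 1
| inY_sub x y : inY x -> inY y -> inY (x - y)
| inY_mul x y : inY x -> inY y -> inY (x * y).

End Defs.

(* A difference operator sum_j c_j(u) D^j is represented by the sequence of its
   coefficient functions [:: c_0; c_1; ...], c_j : CC -> K. *)
Section Dop.
Variable K : fieldType.

Definition dop := seq (CC -> K).

Definition dcoef (p : dop) (j : nat) (u : CC) : K := nth (fun _ => 0) p j u.

Definition dC (c : CC -> K) : dop := [:: c].
Definition dD (k : nat) : dop := rcons (nseq k (fun _ => 0)) (fun _ => 1).

Definition dadd (p q : dop) : dop :=
  mkseq (fun j u => dcoef p j u + dcoef q j u) (maxn (size p) (size q)).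
Definition dopp (p : dop) : dop := map (fun c u => - c u) p.
Definition dsub (p q : dop) : dop := dadd p (dopp q).

(* product, using D c(u) = c(u+1) D:
   (sum_i a_i D^i)(sum_j b_j D^j) = sum_k (sum_{i+j=k} a_i(u) b_j(u+i)) D^k *)
Definition dmul (p q : dop) : dop :=
  mkseq (fun k u => \sum_(i < k.+1) dcoef p i u * dcoef q (k - i) (u + i%:R))
        (size p + size q).-1.

Definition dprod (l : seq dop) : dop := foldr dmul (dC (fun _ => 1)) l.

Definition deq (p q : dop) : Prop := forall j u, dcoef p j u = dcoef q j u.

End Dop.

Definition ish (u : CC) (k : int) : CC := u + k%:~R.

(* Main.v *)
Require Import Defs.
From mathcomp Require Import all_boot all_order all_algebra.
From mathcomp Require Import complex.
From mathcomp Require Import Rstruct.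
From mathcomp Require Import zify ring.
From Stdlib Require Import FunctionalExtensionality.
Import Order.TTheory GRing.Theory Num.Theory.
Local Open Scope ring_scope.
Set Implicit Arguments.
Unset Strict Implicit.
Unset Printing Implicit Defensive.


Section Ops.
Variable K : fieldType.

Definition act (p : dop K) (f : CC -> K) : CC -> K :=
  fun u => \sum_(j < size p) dcoef p j u * f (u + j%:R).

Lemma dcoef_default (p : dop K) j u : (size p <= j)%N -> dcoef p j u = 0.
Proof. by move=> h; rewrite /dcoef nth_default. Qed.

Lemma act_widen (p : dop K) f u M : (size p <= M)%N ->
  act p f u = \sum_(j < M) dcoef p j u * f (u + j%:R).
Proof.
move=> hM; rewrite /act (big_ord_widen _ (fun j => dcoef p j u * f (u + j%:R)) hM).
rewrite big_mkcond /=; apply: eq_bigr => i _.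
by case: ifP => // /negbT; rewrite -leqNgt => h; rewrite dcoef_default // mul0r.
Qed.

Lemma dcoef_dadd (p q : dop K) j u : dcoef (dadd p q) j u = dcoef p j u + dcoef q j u.
Proof.
rewrite /dadd /dcoef; case: (ltnP j (maxn (size p) (size q))) => h.
  by rewrite nth_mkseq.
rewrite nth_default ?size_mkseq // !nth_default ?addr0 //.
  by apply: leq_trans h; rewrite leq_maxr.
by apply: leq_trans h; rewrite leq_maxl.
Qed.

Lemma dcoef_dopp (p : dop K) j u : dcoef (dopp p) j u = - dcoef p j u.
Proof.
rewrite /dopp /dcoef; case: (ltnP j (size p)) => h.
  by rewrite (nth_map (fun _ => 0)).
by rewrite !nth_default ?size_map // oppr0.
Qed.

Lemma act_dadd (p q : dop K) f : act (dadd p q) f = fun u => act p f u + act q f u.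
Proof.
apply: functional_extensionality => u.
have hs : size (dadd p q) = maxn (size p) (size q) by rewrite size_mkseq.
rewrite (@act_widen _ _ _ (maxn (size p) (size q))) ?hs //.
rewrite (@act_widen p _ _ (maxn (size p) (size q))) ?leq_maxl //.
rewrite (@act_widen q _ _ (maxn (size p) (size q))) ?leq_maxr // -big_split /=.
by apply: eq_bigr => i _; rewrite dcoef_dadd mulrDl.
Qed.

Lemma act_dopp (p : dop K) f : act (dopp p) f = fun u => - act p f u.
Proof.
apply: functional_extensionality => u.
rewrite /act size_map -sumrN; apply: eq_bigr => i _.
by rewrite dcoef_dopp mulNr.
Qed.

Lemma act_dsub (p q : dop K) f : act (dsub p q) f = fun u => act p f u - act q f u.
Proof. by rewrite /dsub act_dadd act_dopp. Qed.

Lemma act_dC (c : CC -> K) f : act (dC c) f = fun u => c u * f u.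
Proof.
apply: functional_extensionality => u.
by rewrite /act /= big_ord1 /dcoef /= addr0.
Qed.

Lemma act_dD k f : act (dD K k) f = fun u => f (u + k%:R).
Proof.
apply: functional_extensionality => u.
rewrite /act /dD size_rcons size_nseq big_ord_recr /= big1 ?add0r.
  by rewrite /dcoef nth_rcons size_nseq ltnn eqxx mul1r.
move=> i _; rewrite /dcoef nth_rcons size_nseq /= ltn_ord nth_nseq ltn_ord.
by rewrite mul0r.
Qed.

Lemma act_opp (p : dop K) g : act p (fun v => - g v) = fun u => - act p g u.
Proof.
apply: functional_extensionality => u.
by rewrite /act -sumrN; apply: eq_bigr => i _; rewrite mulrN.
Qed.

Lemma tri (G : nat -> nat -> K) M :
  \sum_(k < M) \sum_(i < k.+1) G i (k - i)%N = \sum_(i < M) \sum_(j < M - i) G i j.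
Proof.
elim: M => [|M IH]; first by rewrite !big_ord0.
rewrite big_ord_recr /= IH [RHS]big_ord_recr /= subSnn big_ord1.
rewrite [in RHS](eq_bigr (fun i : 'I_M => \sum_(j < M - i) G i j + G i (M - i)%N)).
  rewrite big_split /= -addrA; congr (_ + _).
  by rewrite big_ord_recr /= subnn.
move=> i _; rewrite subSn; last by apply: ltnW.
by rewrite big_ord_recr.
Qed.

Lemma sq_widen (F : nat -> K) n1 T : (n1 <= T)%N ->
  \sum_(i < n1) F i = \sum_(i < T) (if (i < n1)%N then F i else 0).
Proof. by move=> h; rewrite (big_ord_widen _ F h) big_mkcond. Qed.

Lemma tri_sq (G : nat -> nat -> K) sp sq M : ((sp + sq).-1 <= M)%N ->
  (forall i j, (sp <= i)%N || (sq <= j)%N -> G i j = 0) ->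
  \sum_(i < M) \sum_(j < M - i) G i j = \sum_(i < sp) \sum_(j < sq) G i j.
Proof.
move=> hM hG; set T := (sp + sq + M)%N.
rewrite (@sq_widen (fun i => \sum_(j < M - i) G i j) M T); last by rewrite /T; lia.
rewrite (@sq_widen (fun i => \sum_(j < sq) G i j) sp T); last by rewrite /T; lia.
apply: eq_bigr => i _.
have e : \sum_(j < T) G i j = \sum_(j < sq) G i j.
  rewrite (@sq_widen (G i) sq T); last by rewrite /T; lia.
  apply: eq_bigr => j _; case: ifP => // /negbT; rewrite -leqNgt => h.
  by rewrite hG // h orbT.
have hi' := ltn_ord i.
case: ifP => hi; case: ifP => hi2.
- rewrite -e (@sq_widen (G i) (M - i) T); last by rewrite /T; lia.
  apply: eq_bigr => j _; case: ifP => // /negbT; rewrite -leqNgt => h.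
  symmetry; apply: hG; apply/orP.
  case: (leqP sp i) => a; first by left.
  right; case: (leqP sq j) => // b; lia.
- by rewrite big1 // => j _; apply: hG; move/negbT: hi2; rewrite -leqNgt => ->.
- rewrite -e big1 // => j _; apply: hG; apply/orP.
  move/negbT: hi; rewrite -leqNgt => hi3.
  case: (leqP sp i) => a; first by left.
  right; lia.
- by [].
Qed.

Lemma act_dmul (p q : dop K) f : act (dmul p q) f = act p (act q f).
Proof.
apply: functional_extensionality => u.
rewrite /act /dmul size_mkseq.
set M := ((size p + size q).-1)%N.
set G := fun i j => dcoef p i u * dcoef q j (u + i%:R) * f (u + i%:R + j%:R).
transitivity (\sum_(k < M) \sum_(i < k.+1) G i (k - i)%N).
  apply: eq_bigr => k _; rewrite /dcoef nth_mkseq ?ltn_ord // -/dcoef mulr_suml.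
  apply: eq_bigr => i _; rewrite /G -addrA -natrD subnKC //.
  by have := ltn_ord i; rewrite ltnS.
rewrite tri (@tri_sq _ (size p) (size q)) ?leqnn //.
  apply: eq_bigr => i _; rewrite mulr_sumr; apply: eq_bigr => j _.
  by rewrite /G mulrA.
move=> i j /orP [] h; rewrite /G.
  by rewrite (@dcoef_default p i) // !mul0r.
by rewrite (@dcoef_default q j) // mulr0 mul0r.
Qed.

Definition actfold (l : seq (dop K)) (h : CC -> K) := foldr (fun X g => act X g) h l.

Lemma act_one h : act (dC (fun _ => 1)) h = h.
Proof. by rewrite act_dC; apply: functional_extensionality => u; rewrite mul1r. Qed.

Lemma act_dprod l h : act (dprod l) h = actfold l h.
Proof.
elim: l h => [|X l IH] h /=; first exact: act_one.
by rewrite act_dmul IH.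
Qed.

Lemma actfold_cat l1 l2 h : actfold (l1 ++ l2) h = actfold l1 (actfold l2 h).
Proof. by rewrite /actfold foldr_cat. Qed.

Lemma actfold_rcons l x h : actfold (rcons l x) h = actfold l (act x h).
Proof. by rewrite -cats1 actfold_cat. Qed.

Lemma actfold_opp l g : actfold l (fun v => - g v) = fun u => - actfold l g u.
Proof.
elim: l => [|X l IH] //=.
by rewrite IH act_opp.
Qed.

Lemma deq_act (p q : dop K) : (forall h, act p h = act q h) -> deq p q.
Proof.
move=> H j u.
pose h := fun v : CC => if v == u + j%:R then (1 : K) else 0.
have key : forall r : dop K, act r h u = dcoef r j u.
  move=> r; rewrite (@act_widen r _ _ (maxn (size r) j.+1)) ?leq_maxl //.
  have hj : (j < maxn (size r) j.+1)%N by rewrite leq_maxr.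
  rewrite (bigD1 (Ordinal hj)) //=.
  rewrite /h eqxx mulr1 big1 ?addr0 // => i hi.
  case: ifP; last by rewrite mulr0.
  move/eqP/addrI/eqP; rewrite eqr_nat => /eqP e.
  by move: hi; rewrite -val_eqE /= e eqxx.
by rewrite -!key H.
Qed.

End Ops.


Lemma two_neq0 : (2 : CC) != 0.
Proof. by rewrite pnatr_eq0. Qed.

Lemma hs_ish (u : CC) (k e : int) : hs (ish u k) e = hs u (2 * k + e).
Proof.
rewrite /hs /ish intrD intrM /=.
have h2 := two_neq0. field. done.
Qed.

Lemma hs_addn (u : CC) (m : nat) (e : int) : hs (u + m%:R) e = hs u (e + (2 * m)%N%:Z).
Proof.
rewrite /hs intrD -pmulrn natrM.
have h2 := two_neq0. field. done.
Qed.

Lemma hs_add1 (u : CC) (e : int) : hs (u + 1) e = hs u (e + 2).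
Proof. by have := hs_addn u 1 e; rewrite mulr1n. Qed.

Lemma hsE (u : CC) (e e' : int) : e = e' -> hs u e = hs u e'.
Proof. by move->. Qed.

Section Alg.
Variable K : fieldType.
Variable n : nat.
Variable Q : nat -> CC -> K.
Hypothesis hn : (2 <= n)%N.
Hypothesis hQ : forall a u, (1 <= a <= n)%N -> Q a u != 0.

Lemma Yf_neq0 a v : (a <= n)%N -> Yf n Q a v != 0.
Proof.
move=> ha; rewrite /Yf; case: ifP => [_|a0]; first by rewrite oner_eq0.
by rewrite mulf_neq0 // ?invr_eq0 hQ // ha andbT lt0n a0.
Qed.

Definition Ff (s : nat) (u : CC) : K := Yf n Q s.-1 (hs u ((2 * n + 3)%N%:Z - s%:Z)).
Definition Gf (s : nat) (u : CC) : K := (Yf n Q s.-1 (hs u (s%:Z - 1)))^-1.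

Lemma idA1 k u : (1 <= k <= n)%N ->
  Ff k.+1 u = Ff k u * zf n Q k (ish u (n.+1%:Z - k%:Z)).
Proof.
move=> /andP [k1 kn]; rewrite /Ff /zf !hs_ish /=.
rewrite (@hsE u (2 * (n.+1%:Z - k%:Z) + k%:Z) ((2*n+3)%N%:Z - k.+1%:Z)); last by lia.
rewrite (@hsE u (2 * (n.+1%:Z - k%:Z) + k.+1%:Z) ((2*n+3)%N%:Z - k%:Z)); last by lia.
have := @Yf_neq0 k.-1 (hs u ((2*n+3)%N%:Z - k%:Z)) (leq_trans (leq_pred k) kn).
move=> h; field; done.
Qed.

Ltac fld := field; try (repeat (apply/andP; split)); try assumption; try (apply: Yf_neq0; lia); try (apply: hQ; lia).
Ltac norm_hs t := match goal with |- context [hs ?u ?e] =>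
  assert_fails (constr_eq e t);
  let H := fresh in assert (H : e = t) by lia; rewrite H; clear H end.
Ltac hsr e e' := rewrite (@hsE _ e e'); last by lia.
Ltac hsu u e e' := rewrite (@hsE u e e'); last by lia.

Lemma Yk_neq0 k v : (k <= n)%N -> Yf n Q k v != 0.
Proof. exact: Yf_neq0. Qed.

Lemma idA2 k u : (1 <= k <= n)%N ->
  zbf n Q k u * Ff k.+1 (u + 1) = Ff k u.
Proof.
move=> /andP [k1 kn]; rewrite /Ff /zbf hs_add1 /=.
hsr ((2*n+3)%N%:Z - k.+1%:Z + 2) ((2*n+4)%N%:Z - k%:Z).
have := @Yf_neq0 k (hs u ((2*n+4)%N%:Z - k%:Z)) kn.
move=> h; fld.
Qed.

Lemma idB1 k u : (1 <= k <= n)%N ->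
  Gf k.+1 u = zbf n Q k (ish u (k%:Z - n.+2%:Z)) * Gf k u.
Proof.
move=> /andP [k1 kn]; rewrite /Gf /zbf !hs_ish /=.
hsr (k.+1%:Z - 1) (k%:Z).
hsr (2 * (k%:Z - n.+2%:Z) + ((2*n+3)%N%:Z - k%:Z)) (k%:Z - 1).
hsr (2 * (k%:Z - n.+2%:Z) + ((2*n+4)%N%:Z - k%:Z)) (k%:Z).
have := @Yf_neq0 k (hs u k%:Z) kn.
have := @Yf_neq0 k.-1 (hs u (k%:Z - 1)) (leq_trans (leq_pred k) kn).
move=> h1 h2; fld.
Qed.

Lemma idB2 k u : (1 <= k <= n)%N ->
  Gf k.+1 u * zf n Q k u = Gf k (u + 1).
Proof.
move=> /andP [k1 kn]; rewrite /Gf /zf hs_add1 /=.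
hsr (k.+1%:Z - 1) (k%:Z).
hsr (k%:Z - 1 + 2) (k.+1%:Z).
have := @Yf_neq0 k (hs u k%:Z) kn.
have := @Yf_neq0 k.-1 (hs u k.+1%:Z) (leq_trans (leq_pred k) kn).
move=> h1 h2; fld.
Qed.

Lemma idM1 u : Ff n.+1 u * (zbf n Q n (ish u (-1)) * zf n Q n u) * Gf n.+1 u = 1.
Proof.
rewrite /Gf /Ff /zf /zbf !hs_ish /=.
hsr ((2*n+3)%N%:Z - n.+1%:Z) (n%:Z+2).
hsr (2 * -1 + ((2*n+3)%N%:Z - n%:Z)) (n.+1%:Z).
hsr (2 * -1 + ((2*n+4)%N%:Z - n%:Z)) (n%:Z+2).
hsr (n.+1%:Z - 1) (n%:Z).
have := @Yf_neq0 n (hs u (n%:Z + 2)) (leqnn n).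
have := @Yf_neq0 n (hs u n%:Z) (leqnn n).
have := @Yf_neq0 n.-1 (hs u n.+1%:Z) (leq_pred n).
move=> h1 h2 h3; fld.
Qed.

Lemma Wform u : zbf n Q n u * zf n Q n (ish u 1) =
  Yf n Q n (hs u (n%:Z + 2)) / Yf n Q n (hs u (n%:Z + 4)).
Proof.
rewrite /zf /zbf !hs_ish /=.
hsr (2*1 + n.+1%:Z) ((2*n+3)%N%:Z - n%:Z).
hsr ((2*n+4)%N%:Z - n%:Z) (n%:Z+4).
hsr (2*1 + n%:Z) (n%:Z+2).
have := @Yf_neq0 n.-1 (hs u ((2*n+3)%N%:Z - n%:Z)) (leq_pred n).
move=> h1; fld.
Qed.

Lemma idM2 u : Ff n.+1 u * Gf n.+1 (u + 2%:R) = zbf n Q n u * zf n Q n (ish u 1).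
Proof.
rewrite Wform /Gf /Ff hs_addn /=.
hsr ((2*n+3)%N%:Z - n.+1%:Z) (n%:Z+2).
by hsr (n.+1%:Z - 1 + (2*2)%N%:Z) (n%:Z+4).
Qed.

Lemma hs_hs (u : CC) (e e' : int) : hs (hs u e) e' = hs u (e + e').
Proof. rewrite /hs intrD mulrDl; ring. Qed.

Lemma Yn_eq v : Yf n Q n v = Q n (hs v (-2)) / Q n (hs v 2).
Proof.
rewrite /Yf /d_ eqxx; have -> : (n == 0%N) = false by apply/negbTE; rewrite -lt0n; lia.
done.
Qed.

Lemma idW u : xmid n Q u * xmid n Q (u + 1) = zbf n Q n u * zf n Q n (ish u 1).
Proof.
rewrite Wform !Yn_eq /xmid !hs_add1 !hs_hs.
repeat norm_hs (n%:Z); repeat norm_hs (n%:Z+2); repeat norm_hs (n%:Z+4); repeat norm_hs (n%:Z+6).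
fld.
Qed.

End Alg.


Section Main.
Variable K : fieldType.
Variable n : nat.
Variable Q : nat -> CC -> K.
Hypothesis hn : (2 <= n)%N.
Hypothesis hQ : forall a u, (1 <= a <= n)%N -> Q a u != 0.

Definition oneD := dC (fun _ : CC => 1 : K).
Definition fa a := dsub oneD (dmul (dC (zbf n Q a)) (dD K 1)).
Definition ga a := dsub oneD (dmul (dC (zf n Q a)) (dD K 1)).
Definition midA := dsub oneD (dmul (dC (fun u => zbf n Q n u * zf n Q n (ish u 1))) (dD K 2)).
Definition fb a := dsub (dC (fun u => zf n Q a (ish u (n.+1%:Z - a%:Z)))) (dD K 1).
Definition midB := dsub (dC (fun u => zbf n Q n (ish u (-1)) * zf n Q n u)) (dD K 2).
Definition gb a := dsub (dC (fun u => zbf n Q a (ish u (a%:Z - n.+2%:Z)))) (dD K 1).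

Lemma act_sub1 (c : CC -> K) k h :
  act (dsub oneD (dmul (dC c) (dD K k))) h = fun u => h u - c u * h (u + k%:R).
Proof. by rewrite act_dsub /oneD act_one act_dmul act_dD act_dC. Qed.

Lemma act_subD (c : CC -> K) k h :
  act (dsub (dC c) (dD K k)) h = fun u => c u * h u - h (u + k%:R).
Proof. by rewrite act_dsub act_dD act_dC. Qed.

Lemma induct m : forall k, (k + m = n.+1)%N -> (1 <= k)%N -> forall h,
  actfold (map fa (iota k m) ++ midA :: rev (map ga (iota k m))) h =
  fun u => Ff n Q k u * actfold (map fb (iota k m) ++ midB :: rev (map gb (iota k m)))
                          (fun v => Gf n Q k v * h v) u.
Proof.
elim: m => [|m IH] k hk k1 h.
  rewrite addn0 in hk; subst k => /=.
  rewrite /midA /midB act_sub1 act_subD; apply: functional_extensionality => u.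
  have e1 := idM1 hn hQ u; have e2 := idM2 hn hQ u.
  rewrite -e2.
  set F := Ff n Q n.+1 u; set W' := zbf n Q n (ish u (-1)) * zf n Q n u.
  set G := Gf n Q n.+1 u; set G2 := Gf n Q n.+1 (u + 2%:R).
  transitivity ((F * W' * G) * h u - F * G2 * h (u + 2%:R)); first by rewrite e1 mul1r.
  ring.
have kn : (1 <= k <= n)%N by apply/andP; split => //; lia.
rewrite /= !rev_cons -!rcons_cons -!rcons_cat !actfold_rcons IH //; last by lia.
have eB : (fun v => Gf n Q k.+1 v * act (ga k) h v) = act (gb k) (fun v => Gf n Q k v * h v).
  rewrite /ga /gb act_sub1 act_subD; apply: functional_extensionality => u.
  rewrite mulr1n mulrBr -(idB2 hn hQ _ kn) (idB1 hn hQ _ kn); ring.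
rewrite eB; set X := actfold _ _.
rewrite /fa /fb act_sub1 act_subD; apply: functional_extensionality => u.
rewrite mulr1n.
transitivity (Ff n Q k.+1 u * X u - (zbf n Q k u * Ff n Q k.+1 (u+1)) * X (u+1)); first by rewrite mulrA.
rewrite (idA2 hn hQ _ kn) (idA1 hn hQ _ kn); ring.
Qed.

End Main.


Lemma rev_iota_map a m : rev (iota a m) = map (fun i => a + m - i)%N (iota 1 m).
Proof.
elim: m => [|m IH] //.
rewrite -addn1 iotaD rev_cat /= IH.
rewrite [in RHS]addn1 /=.
have -> : iota 2 m = map (addn 1) (iota 1 m) by rewrite -iotaDl.
rewrite -map_comp; congr (_ :: _); first by lia.
by apply: eq_map => i /=; lia.
Qed.

Lemma ish_m1_add1 (u : CC) : ish u (-1) + 1 = u.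
Proof. by rewrite /ish; ring. Qed.

Lemma ish_ish_1 (u : CC) : ish (ish u (-1)) 1 = u.
Proof. by rewrite /ish; ring. Qed.

Lemma add1_1 (u : CC) : u + 1 + 1 = u + 2%:R.
Proof. by ring. Qed.

Section Final.
Variable K : fieldType.
Variable n : nat.
Variable Q : nat -> CC -> K.
Hypothesis hn : (2 <= n)%N.
Hypothesis hQ : forall a u, (1 <= a <= n)%N -> Q a u != 0.

Lemma Ff1 u : Ff n Q 1 u = 1.
Proof. by rewrite /Ff /Yf. Qed.
Lemma Gf1 u : Gf n Q 1 u = 1.
Proof. by rewrite /Gf /Yf /= invr1. Qed.

Let LA := map (fa n Q) (iota 1 n) ++ [:: midA n Q] ++ rev (map (ga n Q) (iota 1 n)).
Let LB := map (fb n Q) (iota 1 n) ++ [:: midB n Q] ++ rev (map (gb n Q) (iota 1 n)).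

Lemma actAB h : act (dprod LA) h = act (dprod LB) h.
Proof.
rewrite !act_dprod /LA /LB /= (@induct _ _ _ hn hQ n 1) //.
apply: functional_extensionality => u; rewrite Ff1 mul1r.
by congr actfold; apply: functional_extensionality => v; rewrite Gf1 mul1r.
Qed.


Lemma iota_split : iota 1 (2 * n + 2) = iota 1 n ++ n.+1 :: n.+2 :: iota n.+3 n.
Proof.
have -> : (2 * n + 2 = n + (2 + n))%N by lia.
rewrite iotaD iotaD /=; congr (_ ++ _ :: _ :: iota _ _); lia.
Qed.

Lemma xf_lo i u : (1 <= i <= n)%N -> xf n Q i u = zf n Q i u.
Proof. by case/andP => _ h; rewrite /xf h. Qed.
Lemma xf_n1 u : xf n Q n.+1 u = xmid n Q u.
Proof. by rewrite /xf ltnn eqxx. Qed.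
Lemma xf_n2 u : xf n Q n.+2 u = - xmid n Q u.
Proof.
rewrite /xf; have -> : (n.+2 <= n)%N = false by lia.
have -> : (n.+2 == n.+1) = false by lia.
by rewrite eqxx.
Qed.
Lemma xf_hi i u : (n.+3 <= i)%N -> xf n Q i u = zbf n Q (2 * n + 3 - i) u.
Proof.
move=> h; rewrite /xf; have -> : (i <= n)%N = false by lia.
have -> : (i == n.+1) = false by lia.
by have -> : (i == n.+2) = false by lia.
Qed.
Lemma epsf_out (eps : K) i : (i != n.+1) -> (i != n.+2) -> epsf n eps i = 1.
Proof. by move=> h1 h2; rewrite /epsf (negbTE h1) (negbTE h2). Qed.
Lemma epsf_n1 (eps : K) : epsf n eps n.+1 = eps.
Proof. by rewrite /epsf eqxx. Qed.
Lemma epsf_n2 (eps : K) : epsf n eps n.+2 = eps.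
Proof. by rewrite /epsf eqxx orbT. Qed.

Definition cF (eps : K) i := dsub (oneD K) (dmul (dC (fun u => epsf n eps i * xf n Q i u)) (dD K 1)).
Definition eF (eps : K) i := dsub (dC (fun u => epsf n eps i * xf n Q i (ish u (n.+1%:Z - i%:Z)))) (dD K 1).

Lemma actCA (eps : K) (heps : eps * eps = 1) h :
  act (dprod (rev (map (cF eps) (iota 1 (2 * n + 2))))) h = act (dprod LA) h.
Proof.
rewrite !act_dprod iota_split map_cat rev_cat /= !rev_cons actfold_cat !actfold_rcons.
rewrite /LA actfold_cat /=.
have e1 : rev (map (cF eps) (iota 1 n)) = rev (map (ga n Q) (iota 1 n)).
  congr rev; apply/eq_in_map => a; rewrite mem_iota => ha.
  rewrite /cF /ga; congr (dsub _ (dmul (dC _) _)); apply: functional_extensionality => u.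
  rewrite epsf_out ?mul1r ?xf_lo //; lia.
have e3 : rev (map (cF eps) (iota n.+3 n)) = map (fa n Q) (iota 1 n).
  rewrite -map_rev rev_iota_map -map_comp; apply/eq_in_map => a; rewrite mem_iota => ha /=.
  rewrite /cF /fa; congr (dsub _ (dmul (dC _) _)); apply: functional_extensionality => u.
  rewrite epsf_out ?mul1r ?xf_hi; try lia.
  by congr zbf; lia.
rewrite e1 e3; congr actfold.
set g := actfold _ h.
rewrite /cF /midA !act_sub1 mulr1n; apply: functional_extensionality => u.
rewrite epsf_n1 epsf_n2 !xf_n1 !xf_n2 add1_1 -idW //.
transitivity (g u - (eps * eps) * xmid n Q u * xmid n Q (u + 1) * g (u + 2%:R)); first by ring.
by rewrite heps mul1r.
Qed.


Lemma ish0 (u : CC) : ish u 0 = u.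
Proof. by rewrite /ish; ring. Qed.
Lemma ish_add1_m1 (u : CC) : ish (u + 1) (-1) = u.
Proof. by rewrite /ish; ring. Qed.

Lemma actEB (eps : K) (heps : eps * eps = 1) h :
  act (dprod (map (eF eps) (iota 1 (2 * n + 2)))) h = fun u => - act (dprod LB) h u.
Proof.
rewrite !act_dprod iota_split map_cat /= actfold_cat /=.
rewrite /LB actfold_cat /=.
have e1 : map (eF eps) (iota 1 n) = map (fb n Q) (iota 1 n).
  apply/eq_in_map => a; rewrite mem_iota => ha.
  rewrite /eF /fb; congr (dsub (dC _) _); apply: functional_extensionality => u.
  rewrite epsf_out ?mul1r ?xf_lo //; lia.
have e3 : map (eF eps) (iota n.+3 n) = rev (map (gb n Q) (iota 1 n)).
  rewrite -map_rev rev_iota_map -map_comp.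
  have -> : iota n.+3 n = map (addn n.+2) (iota 1 n) by rewrite -iotaDl addn1.
  rewrite -map_comp; apply/eq_in_map => a; rewrite mem_iota => ha /=.
  rewrite /eF /gb; congr (dsub (dC _) _); apply: functional_extensionality => u.
  rewrite epsf_out ?mul1r ?xf_hi; try lia.
  by congr (zbf n Q _ (ish u _)); lia.
rewrite e1 e3 -actfold_opp; congr actfold.
set g := actfold _ h.
rewrite /eF /midB !act_subD mulr1n; apply: functional_extensionality => u.
rewrite epsf_n1 epsf_n2 !xf_n1 !xf_n2 subrr ish0 add1_1.
have -> : (n.+1%:Z - n.+2%:Z) = -1 by lia.
rewrite ish_add1_m1.
have hw := idW hn hQ (ish u (-1)); rewrite ish_m1_add1 ish_ish_1 in hw.
rewrite -hw.
transitivity (- ((eps * eps) * xmid n Q u * xmid n Q (ish u (-1)) * g u - g (u + 2%:R))); first by ring.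
by rewrite heps mul1r; ring.
Qed.

End Final.


Section Sizes.
Variable K : fieldType.

Fixpoint allPr (P : dop K -> Prop) (l : seq (dop K)) : Prop :=
  if l is X :: l' then P X /\ allPr P l' else True.

Definition isLin (X : dop K) := size X = 2%N /\ forall u, dcoef X 1 u = -1.

Lemma isLin_sub (c : CC -> K) : isLin (dsub (dC c) (dD K 1)).
Proof.
split; first by rewrite /dsub /dadd size_mkseq size_map /dD size_rcons size_nseq.
by move=> u; rewrite /dsub dcoef_dadd dcoef_dopp /dcoef /= add0r.
Qed.

Lemma size_dprod_lin l : allPr isLin l -> size (dprod l) = (size l).+1.
Proof.
elim: l => [|X l IH] //= [[hX _] H].
by rewrite /dmul size_mkseq IH // hX.
Qed.

Lemma lead_dprod_lin l u : allPr isLin l ->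
  dcoef (dprod l) (size l) u = (-1) ^+ size l.
Proof.
elim: l u => [|X l IH] u; first by rewrite /dcoef.
move=> [HX Hl].
have sP := size_dprod_lin Hl.
have -> : dprod (X :: l) = dmul X (dprod l) by [].
rewrite [size (X :: l)]/= /dmul /dcoef nth_mkseq; last by rewrite sP HX.1.
rewrite -/dcoef big_ord_recl big_ord_recl /= subn0.
rewrite (@nth_default _ _ (dprod l) (size l).+1) ?sP //= mulr0 add0r.
rewrite big1 ?addr0.
  have := HX.2 u; rewrite /dcoef => ->.
  by rewrite /bump /= subn1 /= -/(dcoef (dprod l) (size l) (u + 1%:R)) IH // exprS mulN1r.
move=> i _; rewrite (@nth_default _ _ X) ?mul0r // HX.1.
done.
Qed.

End Sizes.

Section Ygood.
Variable K : fieldType.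
Variable n : nat.
Variable Q : nat -> CC -> K.

Lemma inY0 : inY n Q 0.
Proof. by rewrite -(subrr 1); apply: inY_sub; apply: inY_1. Qed.
Lemma inYN x : inY n Q x -> inY n Q (- x).
Proof. by move=> h; rewrite -sub0r; apply: inY_sub => //; exact: inY0. Qed.
Lemma inYD x y : inY n Q x -> inY n Q y -> inY n Q (x + y).
Proof. by move=> hx hy; rewrite -(opprK y); apply: inY_sub => //; apply: inYN. Qed.

Definition good (p : dop K) := forall j u, inY n Q (dcoef p j u).

Lemma good_dC c : (forall u, inY n Q (c u)) -> good (dC c).
Proof. by move=> h [|j] u; rewrite /dcoef /= ?nth_nil; [exact: h | exact: inY0]. Qed.

Lemma good_dD k : good (dD K k).
Proof.
move=> j u; rewrite /dcoef /dD nth_rcons size_nseq nth_nseq.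
case: (j < k)%N => /=; first exact: inY0.
case: (j == k) => /=; [exact: inY_1 | exact: inY0].
Qed.

Lemma good_dsub p q : good p -> good q -> good (dsub p q).
Proof.
by move=> hp hq j u; rewrite /dsub dcoef_dadd dcoef_dopp; apply: inYD => //; apply: inYN.
Qed.

Lemma good_dmul p q : good p -> good q -> good (dmul p q).
Proof.
move=> hp hq k u; case: (ltnP k (size p + size q).-1) => hk.
  rewrite /dcoef /dmul nth_mkseq // -/dcoef.
  apply: (big_ind (inY n Q)); [exact: inY0 | exact: inYD |].
  by move=> i _; apply: inY_mul.
by rewrite dcoef_default ?size_mkseq //; exact: inY0.
Qed.

Lemma good_dprod l : allPr good l -> good (dprod l).
Proof.
elim: l => [|X l IH] /=; first by move=> _; apply: good_dC => _; exact: inY_1.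
by move=> [hX hl]; apply: good_dmul => //; apply: IH.
Qed.

Lemma inY_zf a v : (1 <= a <= n)%N -> inY n Q (zf n Q a v).
Proof.
move=> ha; rewrite /zf; apply: inY_mul; first exact: inY_Y.
case: a ha => [|[|a]] ha //=.
  by rewrite /Yf /= invr1; exact: inY_1.
by apply: inY_Yinv; lia.
Qed.

Lemma inY_zbf a v : (1 <= a <= n)%N -> inY n Q (zbf n Q a v).
Proof.
move=> ha; rewrite /zbf; apply: inY_mul; last exact: inY_Yinv.
case: a ha => [|[|a]] ha //=.
  by rewrite /Yf /=; exact: inY_1.
by apply: inY_Y; lia.
Qed.

End Ygood.


Lemma allP_cat (K : fieldType) (P : dop K -> Prop) l1 l2 :
  allPr P l1 -> allPr P l2 -> allPr P (l1 ++ l2).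
Proof. by elim: l1 => [|X l IH] //= [hX hl] h2; split => //; apply: IH. Qed.

Lemma allP_rev (K : fieldType) (P : dop K -> Prop) l : allPr P l -> allPr P (rev l).
Proof.
elim: l => [|X l IH] //= [hX hl]; rewrite rev_cons -cats1.
by apply: allP_cat; [apply: IH | split].
Qed.

Lemma allP_map (K : fieldType) (P : dop K -> Prop) (f : nat -> dop K) s :
  (forall i, i \in s -> P (f i)) -> allPr P (map f s).
Proof.
elim: s => [|a s IH] //= H; split; first by apply: H; exact: mem_head.
by apply: IH => i hi; apply: H; rewrite inE hi orbT.
Qed.

Theorem mainTheorem1 (K : fieldType) (n : nat) (Q : nat -> CC -> K)
    (hn : (2 <= n)%N)
    (hQ : forall a u, (1 <= a <= n)%N -> Q a u != 0)
    (eps : K) (heps : eps = 1 \/ eps = -1) :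
  let N := (2 * n + 2)%N in
  let one := dC (fun _ : CC => 1 : K) in
  (* first operator *)
  let A :=
    dprod ([seq dsub one (dmul (dC (zbf n Q a)) (dD K 1)) | a <- iota 1 n]
        ++ [:: dsub one (dmul (dC (fun u => zbf n Q n u * zf n Q n (ish u 1))) (dD K 2))]
        ++ rev [seq dsub one (dmul (dC (zf n Q a)) (dD K 1)) | a <- iota 1 n]) in
  (* second operator *)
  let B :=
    dprod ([seq dsub (dC (fun u => zf n Q a (ish u (n.+1%:Z - a%:Z)))) (dD K 1)
              | a <- iota 1 n]
        ++ [:: dsub (dC (fun u => zbf n Q n (ish u (-1)) * zf n Q n u)) (dD K 2)]
        ++ rev [seq dsub (dC (fun u => zbf n Q a (ish u (a%:Z - n.+2%:Z)))) (dD K 1)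
                  | a <- iota 1 n]) in
  (* third operator *)
  let C :=
    dprod (rev [seq dsub one (dmul (dC (fun u => epsf n eps i * xf n Q i u)) (dD K 1))
                  | i <- iota 1 N]) in
  (* fourth operator, without the overall minus sign *)
  let E :=
    dprod [seq dsub (dC (fun u => epsf n eps i * xf n Q i (ish u (n.+1%:Z - i%:Z)))) (dD K 1)
             | i <- iota 1 N] in
  (* L(u) *)
  let L :=
    dprod [seq dsub (dC (fun u => xf n Q i (ish u (n.+1%:Z - i%:Z)))) (dD K 1)
             | i <- iota 1 N] in
  (deq A B /\ deq B C /\ deq C (dopp E)) /\
  ((forall j u, (N < j)%N -> dcoef L j u = 0) /\
   (forall u, dcoef L N u != 0) /\
   (forall j u, inY n Q (dcoef L j u))).
Proof.
move=> N one A B C E L.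
have heps2 : eps * eps = 1 by case: heps => ->; rewrite ?mulr1 ?mulrNN ?mulr1.
have hAB : forall h, act A h = act B h := actAB hn hQ.
have hCA : forall h, act C h = act A h := actCA hn hQ heps2.
have hEB : forall h, act E h = fun u => - act B h u := actEB hn hQ heps2.
have hL : L = dprod (map (eF n Q 1) (iota 1 N)).
  rewrite /L; congr dprod; apply: eq_map => i; rewrite /eF.
  congr (dsub (dC _) _); apply: functional_extensionality => u.
  by rewrite /epsf; case: ifP => _; rewrite mul1r.
have hLB : forall h, act L h = fun u => - act B h u.
  by move=> h; rewrite hL; apply: (actEB hn hQ (eps := 1)); rewrite mulr1.
have hdL : deq L (dopp B) by apply: deq_act => h; rewrite act_dopp hLB.
have linL : allPr (@isLin K) [seq dsub (dC (fun u => xf n Q i (ish u (n.+1%:Z - i%:Z)))) (dD K 1)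
             | i <- iota 1 N].
  by apply: allP_map => i _; apply: isLin_sub.
split.
  split; first exact: deq_act hAB.
  split; apply: deq_act => h; first by rewrite hCA hAB.
  rewrite act_dopp hCA hAB hEB; apply: functional_extensionality => u.
  by rewrite opprK.
split.
  move=> j u hj; rewrite dcoef_default //.
  by rewrite /L size_dprod_lin // size_map size_iota.
split.
  move=> u; have := lead_dprod_lin u linL; rewrite size_map size_iota => ->.
  by rewrite expf_neq0 // oppr_eq0 oner_eq0.
move=> j u; rewrite hdL dcoef_dopp; apply: inYN; apply: good_dprod.
apply: allP_cat.
  apply: allP_map => a; rewrite mem_iota => ha.
  apply: good_dsub; last exact: good_dD.
  by apply: good_dC => v; apply: inY_zf; lia.
apply: allP_cat.
  split => //; apply: good_dsub; last exact: good_dD.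
  apply: good_dC => v; apply: inY_mul; [apply: inY_zbf | apply: inY_zf]; lia.
apply: allP_rev; apply: allP_map => a; rewrite mem_iota => ha.
apply: good_dsub; last exact: good_dD.
by apply: good_dC => v; apply: inY_zbf; lia.
Qed.
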